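(* Let $(X,Y)$ be any one of the pairs $(F,L)$, $(L,F)$, $(J,j)$, $(j,J)$, $(P,Q)$, $(Q,P)$. For integers $a,b,c,d,e$ put $$\Delta_{xy}=X_{d-a}Y_{e-b}-X_{e-a}Y_{d-b},\quad \Delta_1=X_{d-c}Y_{e-b}-X_{e-c}Y_{d-b},\quad \Delta_2=X_{d-a}X_{e-c}-X_{e-a}X_{d-c}.$$ Then for all integers $k,m$, provided $\Delta_1\neq0$, $\Delta_2\neq0$ and (when $k<0$) $\Delta_{xy}\neq0$, $$\sum_{r=0}^k\left(\frac{\Delta_{xy}}{\Delta_1}\right)^rY_{m-k(a-c)-b+c+(a-c)r}=\frac{\Delta_{xy}}{\Delta_2}\left(\frac{\Delta_{xy}}{\Delta_1}\right)^kX_m-\frac{\Delta_1}{\Delta_2}X_{m-(k+1)(a-c)}.$$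
   Context: All sequences are indexed by $n\in\mathbb Z$. Fibonacci numbers $F_n$ and Lucas numbers $L_n$: $F_n=F_{n-1}+F_{n-2}$, $L_n=L_{n-1}+L_{n-2}$ for all $n\in\mathbb Z$, with $F_0=0,F_1=1,L_0=2,L_1=1$ (so $F_{-n}=(-1)^{n-1}F_n$, $L_{-n}=(-1)^nL_n$). Jacobsthal numbers $J_n$ and Jacobsthal–Lucas numbers $j_n$: $J_n=J_{n-1}+2J_{n-2}$, $j_n=j_{n-1}+2j_{n-2}$ for all $n\in\mathbb Z$, with $J_0=0,J_1=1,j_0=2,j_1=1$ (so $J_{-n}=(-1)^{n-1}2^{-n}J_n$, $j_{-n}=(-1)^n2^{-n}j_n$, rational for negative index). Pell numbers $P_n$ and Pell–Lucas numbers $Q_n$: $P_n=2P_{n-1}+P_{n-2}$, $Q_n=2Q_{n-1}+Q_{n-2}$ for all $n\in\mathbb Z$, with $P_0=0,P_1=1,Q_0=2,Q_1=2$ (so $P_{-n}=(-1)^{n-1}P_n$, $Q_{-n}=(-1)^nQ_n$). Summation convention: for an integer $k<0$, $\sum_{r=0}^k f_r$ means $-\sum_{r=k+1}^{-1} f_r$ (in particular it equals $0$ when $k=-1$). *)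

(* Defs.v *)
From HB Require Import structures.
From mathcomp Require Import all_boot all_order all_algebra.
Set Implicit Arguments. Unset Strict Implicit. Unset Printing Implicit Defensive.
Import Order.TTheory GRing.Theory Num.Theory.
Local Open Scope ring_scope.

(* Second-order recurrence W_n = p W_{n-1} + q W_{n-2} with W_0 = a0, W_1 = a1,
   extended to all n in Z (q <> 0 in all our instances). *)
(* fwd n = (W_n, W_{n+1}) for n >= 0 *)
Fixpoint rec_fwd (p q a0 a1 : rat) (n : nat) : rat * rat :=
  match n with
  | O => (a0, a1)
  | S n' => let: (x, y) := rec_fwd p q a0 a1 n' in (y, p * y + q * x)
  end.

(* bwd n = (W_{-n}, W_{-n+1}) for n >= 0, using W_{n-2} = (W_n - p W_{n-1}) / q *)
Fixpoint rec_bwd (p q a0 a1 : rat) (n : nat) : rat * rat :=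
  match n with
  | O => (a0, a1)
  | S n' => let: (x, y) := rec_bwd p q a0 a1 n' in ((y - p * x) / q, x)
  end.

Definition recseq (p q a0 a1 : rat) (z : int) : rat :=
  match z with
  | Posz n => (rec_fwd p q a0 a1 n).1
  | Negz n => (rec_bwd p q a0 a1 n.+1).1   (* Negz n = -(n+1) *)
  end.

Definition Fib   : int -> rat := recseq 1 1 0 1.
Definition Luc   : int -> rat := recseq 1 1 2 1.
Definition Jac   : int -> rat := recseq 1 2 0 1.
Definition JacL  : int -> rat := recseq 1 2 2 1.
Definition Pell  : int -> rat := recseq 2 1 0 1.
Definition PellL : int -> rat := recseq 2 1 2 2.

(* Summation convention: for k >= 0, sum_{r=0}^k f r;
   for k < 0, - sum_{r=k+1}^{-1} f r. *)
Definition zsum (f : int -> rat) (k : int) : rat :=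
  match k with
  | Posz n => \sum_(i < n.+1) f (Posz i)
  | Negz n => - \sum_(i < n) f (- Posz i.+1)   (* k = -(n+1); r = -1, ..., -n *)
  end.

(* Main.v *)
Require Import Defs.
From HB Require Import structures.
From mathcomp Require Import all_boot all_order all_algebra.
From mathcomp Require Import ring.
Import Order.TTheory GRing.Theory Num.Theory.
Local Open Scope ring_scope.
Set Implicit Arguments.

Definition isrec (p q : rat) (W : int -> rat) :=
  forall n : int, W (n + 2) = p * W (n + 1) + q * W n.

Lemma recseqN p q a0 a1 (n : nat) :
  recseq p q a0 a1 (- Posz n) = (rec_bwd p q a0 a1 n).1.
Proof. by case: n. Qed.

Lemma recseqN1 p q a0 a1 (n : nat) :
  recseq p q a0 a1 (- Posz n + 1) = (rec_bwd p q a0 a1 n).2.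
Proof.
case: n => [|n] //=.
have -> : - Posz n.+1 + 1 = - Posz n.
  by rewrite -[n.+1]addn1 PoszD opprD addrNK.
rewrite recseqN /=. by case: (rec_bwd p q a0 a1 n).
Qed.

Lemma recseq_rec p q a0 a1 : q != 0 -> isrec p q (recseq p q a0 a1).
Proof.
move=> hq [] n.
- have -> : Posz n + 2 = Posz n.+2 by rewrite -PoszD addn2.
  have -> : Posz n + 1 = Posz n.+1 by rewrite -PoszD addn1.
  rewrite /= . case: (rec_fwd p q a0 a1 n) => x y /=. by [].
- have e0 : Negz n = - Posz n.+1 by [].
  have e1 : Negz n + 1 = - Posz n.
    by rewrite e0 -[n.+1]addn1 PoszD opprD addrNK.
  have e2 : Negz n + 2 = - Posz n + 1.
    by rewrite -e1 -addrA.
  rewrite e2 e1 e0 recseqN1 !recseqN /=.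
  case: (rec_bwd p q a0 a1 n) => x y /=. field. exact: hq.
Qed.

Lemma rec_uniq p q D : q != 0 -> isrec p q D -> D 0 = 0 -> D 1 = 0 ->
  forall n, D n = 0.
Proof.
move=> hq hD h0 h1.
have fw : forall n : nat, D (Posz n) = 0 /\ D (Posz n.+1) = 0.
  elim=> [|n [IH1 IH2]]; first by split.
  split => //.
  have := hD (Posz n).
  rewrite -PoszD addn2 -PoszD addn1 IH1 IH2 => ->. by rewrite !mulr0 addr0.
have bw : forall n : nat, D (- Posz n) = 0 /\ D (- Posz n + 1) = 0.
  elim=> [|n [IH1 IH2]]; first by split.
  have e1 : - Posz n.+1 + 1 = - Posz n.
    by rewrite -[n.+1]addn1 PoszD opprD addrNK.
  have e2 : - Posz n.+1 + 2 = - Posz n + 1.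
    by rewrite -e1 -addrA.
  split; last by rewrite e1.
  have := hD (- Posz n.+1).
  rewrite e2 e1 IH1 IH2 mulr0 add0r => /esym/eqP.
  by rewrite mulf_eq0 (negPf hq) /= => /eqP.
case=> n; first by case: (fw n).
by case: (bw n.+1).
Qed.

Lemma rec_decomp p q W : q != 0 -> isrec p q W ->
  forall n, W n = W 0 * recseq p q 1 0 n + W 1 * recseq p q 0 1 n.
Proof.
move=> hq hW n.
apply/eqP; rewrite -subr_eq0; apply/eqP.
move: n; apply: (@rec_uniq p q) => //.
- move=> n; rewrite hW !(@recseq_rec _ _ _ _ hq). ring.
- rewrite /=. ring.
- rewrite /=. ring.
Qed.

Lemma rec_shift p q W a : isrec p q W -> isrec p q (fun n => W (n - a)).
Proof. move=> hW n /=. by rewrite addrAC hW addrAC. Qed.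

Lemma shift_decomp p q W a : q != 0 -> isrec p q W ->
  exists A B, forall n, W (n - a) = A * recseq p q 1 0 n + B * recseq p q 0 1 n.
Proof.
move=> hq hW. exists (W (0 - a)), (W (1 - a)) => n.
exact: (rec_decomp hq (rec_shift a hW) n).
Qed.

Lemma core p q X Y (a b c d e : int) : q != 0 -> isrec p q X -> isrec p q Y ->
  forall s,
  (X (d - a) * X (e - c) - X (e - a) * X (d - c)) * Y (s + (c - b)) =
  (X (d - a) * Y (e - b) - X (e - a) * Y (d - b)) * X s -
  (X (d - c) * Y (e - b) - X (e - c) * Y (d - b)) * X (s - (a - c)).
Proof.
move=> hq hX hY s.
have -> : s + (c - b) = (s + c) - b by rewrite addrA.
have -> : s - (a - c) = (s + c) - a by rewrite opprB addrA addrAC.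
rewrite -(congr1 X (addrK c s)).
have [A1 [B1 hA]] := shift_decomp a hq hX.
have [A2 [B2 hC]] := shift_decomp c hq hX.
have [A3 [B3 hB]] := shift_decomp b hq hY.
rewrite !hA !hC !hB. ring.
Qed.

Lemma sum_pos (X Y : int -> rat) (Dxy D1 D2 : rat) (t u : int) :
  D1 != 0 -> D2 != 0 ->
  (forall s, D2 * Y (s + u) = Dxy * X s - D1 * X (s - t)) ->
  forall (n : nat) s, \sum_(i < n.+1) (Dxy / D1) ^+ i * Y (s + u + t * (Posz i)) =
    Dxy / D2 * (Dxy / D1) ^+ n * X (s + t * Posz n) - D1 / D2 * X (s - t).
Proof.
move=> h1 h2 hc; elim=> [|n IH] s.
  rewrite big_ord_recr big_ord0 /= add0r !mulr0 !addr0 !expr0.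
  have hy : Y (s + u) = (Dxy * X s - D1 * X (s - t)) / D2.
    by rewrite -hc mulrC mulKf.
  rewrite hy. field. exact: h2.
rewrite big_ord_recr /= IH.
have en : Posz n.+1 = Posz n + 1 by rewrite -PoszD addn1.
rewrite en.
have hy := hc (s + t * (Posz n + 1)).
have -> : s + u + t * (Posz n + 1) = s + t * (Posz n + 1) + u by ring.
have -> : s + t * Posz n = s + t * (Posz n + 1) - t by ring.
move: hy; set w := s + t * (Posz n + 1) => hy.
have hy' : Y (w + u) = (Dxy * X w - D1 * X (w - t)) / D2.
  by rewrite -hy mulrC mulKf.
rewrite hy' exprSr.
move: ((Dxy / D1) ^+ n) => r.
field. by rewrite h1 h2.
Qed.

Lemma sum_neg (X Y : int -> rat) (Dxy D1 D2 : rat) (t u : int) :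
  Dxy != 0 -> D1 != 0 -> D2 != 0 ->
  (forall s, D2 * Y (s + u) = Dxy * X s - D1 * X (s - t)) ->
  forall (n : nat) s, - \sum_(i < n) (Dxy / D1)^-1 ^+ i.+1 * Y (s + u - t * (Posz i.+1)) =
    Dxy / D2 * (Dxy / D1)^-1 ^+ n.+1 * X (s - t * Posz n.+1) - D1 / D2 * X (s - t).
Proof.
move=> h0 h1 h2 hc; elim=> [|n IH] s.
  rewrite big_ord0 oppr0 mulr1 expr1. field. by rewrite h0 h1 h2.
rewrite big_ord_recr /= opprD IH.
have en : Posz n.+2 = Posz n + 2 by rewrite -PoszD addn2.
have en1 : Posz n.+1 = Posz n + 1 by rewrite -PoszD addn1.
rewrite en en1.
have hy := hc (s - t * (Posz n + 1)).
have -> : s + u - t * (Posz n + 1) = s - t * (Posz n + 1) + u by ring.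
have -> : s - t * (Posz n + 2) = s - t * (Posz n + 1) - t by ring.
move: hy; set w := s - t * (Posz n + 1) => hy.
have hy' : Y (w + u) = (Dxy * X w - D1 * X (w - t)) / D2.
  by rewrite -hy mulrC mulKf.
rewrite hy' !exprSr.
move: ((Dxy / D1)^-1 ^+ n) => r.
field. by rewrite h0 h1 h2.
Qed.

Lemma final (X Y : int -> rat) (Dxy D1 D2 : rat) (a b c k m : int) :
  D1 != 0 -> D2 != 0 -> (k < 0 -> Dxy != 0) ->
  (forall s, D2 * Y (s + (c - b)) = Dxy * X s - D1 * X (s - (a - c))) ->
  zsum (fun r => (Dxy / D1) ^ r * Y (m - k * (a - c) - b + c + (a - c) * r)) k
  = Dxy / D2 * (Dxy / D1) ^ k * X m - D1 / D2 * X (m - (k + 1) * (a - c)).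
Proof.
move=> h1 h2 h0 hc.
case: k h0 => n h0 /=.
- have H := @sum_pos X Y Dxy D1 D2 (a - c) (c - b) h1 h2 hc n (m - Posz n * (a - c)).
  have E : \sum_(i < n.+1) (Dxy / D1) ^ (Posz i) *
       Y (m - Posz n * (a - c) - b + c + (a - c) * Posz i) =
     \sum_(i < n.+1) (Dxy / D1) ^+ i *
       Y (m - Posz n * (a - c) + (c - b) + (a - c) * Posz i).
    apply: eq_bigr => i _. congr (_ * Y _). ring.
  rewrite E H.
  have -> : m - Posz n * (a - c) + (a - c) * Posz n = m by ring.
  have -> : m - Posz n * (a - c) - (a - c) = m - (Posz n + 1) * (a - c) by ring.
  by [].
- have hD : Dxy != 0 by apply: h0.
  have H := @sum_neg X Y Dxy D1 D2 (a - c) (c - b) hD h1 h2 hc n (m + Posz n.+1 * (a - c)).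
  have E : \sum_(i < n) (Dxy / D1) ^ (- Posz i.+1) *
       Y (m - Negz n * (a - c) - b + c + (a - c) * - Posz i.+1) =
     \sum_(i < n) (Dxy / D1)^-1 ^+ i.+1 *
       Y (m + Posz n.+1 * (a - c) + (c - b) - (a - c) * Posz i.+1).
    apply: eq_bigr => i _. rewrite exprVn. congr (_ * Y _).
    rewrite NegzE. ring.
  rewrite E H.
  have -> : m + Posz n.+1 * (a - c) - (a - c) * Posz n.+1 = m by ring.
  have -> : m + Posz n.+1 * (a - c) - (a - c) = m - (Negz n + 1) * (a - c).
    rewrite NegzE. ring.
  rewrite exprVn. by [].
Qed.

Unset Implicit Arguments.
Theorem theorem4 (X Y : int -> rat)
  (HXY : (X = Fib /\ Y = Luc) \/ (X = Luc /\ Y = Fib) \/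
         (X = Jac /\ Y = JacL) \/ (X = JacL /\ Y = Jac) \/
         (X = Pell /\ Y = PellL) \/ (X = PellL /\ Y = Pell))
  (a b c d e k m : int) :
  let Dxy := X (d - a) * Y (e - b) - X (e - a) * Y (d - b) in
  let D1 := X (d - c) * Y (e - b) - X (e - c) * Y (d - b) in
  let D2 := X (d - a) * X (e - c) - X (e - a) * X (d - c) in
  D1 != 0 -> D2 != 0 -> (k < 0 -> Dxy != 0) ->
  zsum (fun r => (Dxy / D1) ^ r * Y (m - k * (a - c) - b + c + (a - c) * r)) k
  = Dxy / D2 * (Dxy / D1) ^ k * X m - D1 / D2 * X (m - (k + 1) * (a - c)).
Proof.
have [p [q [hq [hX hY]]]] : exists p q, q != 0 /\ isrec p q X /\ isrec p q Y.
  case: HXY => [[-> ->]|[[-> ->]|[[-> ->]|[[-> ->]|[[-> ->]|[-> ->]]]]]];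
  [exists 1, 1|exists 1, 1|exists 1, 2|exists 1, 2|exists 2, 1|exists 2, 1];
  (split; first by []); split; apply: recseq_rec => //.
move=> Dxy D1 D2 h1 h2 h0.
have hc := core a b c d e hq hX hY.
exact: (@final X Y Dxy D1 D2 a b c k m h1 h2 h0 hc).
Qed.
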